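(* Consider the two-player, two-item all-pay auction with budgets described in the context, with profile $(B_1,B_2,v_{11},v_{12},v_{21},v_{22})$. Suppose $B_1=B_2$ and $v_{11}=v_{12}=v_{21}=v_{22}$, and let $c=\min\{v_{11},B_1\}$. For $i\in\{1,2\}$ let player $i$'s mixed strategy be the probability distribution supported on the segment $\{(x_{i1},x_{i2}): x_{i1},x_{i2}\in[0,c],\ x_{i2}=-x_{i1}+c\}$ with constant density $f_i(x_{i1},x_{i2})=\frac{1}{\sqrt2\,c}$ with respect to arc length on that segment. Then this strategy profile $(f_1,f_2)$ is a Nash equilibrium.
   Context: Multi-item all-pay auction with budgets. Two players $i\in\{1,2\}$ ($-i$ is the opponent of $i$) and $n$ items $j\in\{1,\dots,n\}$. Player $i$ has budget $B_i\ge0$ and values item $j$ at $v_{ij}>0$. A pure strategy of player $i$ is a vector $(x_{i1},\dots,x_{in})$ with all $x_{ij}\ge0$ and $\sum_j x_{ij}\le B_i$; a mixed strategy is a probability distribution over this set. On each item $j$ the higher bid wins the item. Tie-breaking on item $j$: if $x_{1j}=x_{2j}=\min\{B_1,B_2,v_{1j},v_{2j}\}$ and $\min\{B_i,v_{ij}\}>\min\{B_{-i},v_{-ij}\}$ for some $i$, then player $i$ wins item $j$; in all other ties each player wins item $j$ with probability $\frac12$. Player $i$'s utility on item $j$ is $v_{ij}-x_{ij}$ if he wins it and $-x_{ij}$ otherwise, and his total utility is the sum over items. A Nash equilibrium is a pair of mixed strategies in which each player's strategy maximizes his expected total utility against the other's, over all mixed strategies satisfying his budget constraint. Here $n=2$.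 *)

(* Defs.v *)
From HB Require Import structures.
From mathcomp Require Import all_boot all_order all_algebra.
From mathcomp Require Import all_classical all_reals all_analysis.
Set Implicit Arguments. Unset Strict Implicit. Unset Printing Implicit Defensive.
Import Order.TTheory GRing.Theory Num.Theory.
Import numFieldNormedType.Exports.
Local Open Scope classical_set_scope.
Local Open Scope ring_scope.

Section AllPay.
Variable R : realType.

Definition win_prob (Bi Bo vi vo a b : R) : R :=
  if b < a then 1 else if a < b then 0 else
  let m := Num.min (Num.min Bi Bo) (Num.min vi vo) in
  if (a == m) && (Num.min Bo vo < Num.min Bi vi) then 1
  else if (a == m) && (Num.min Bi vi < Num.min Bo vo) then 0
  else 1 / 2.

Definition item_util (Bi Bo vi vo a b : R) : R :=
  win_prob Bi Bo vi vo a b * vi - a.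

(* Pure strategies of a player are pairs (x_i1, x_i2) : R * R. *)
Definition util1 (B1 B2 v11 v12 v21 v22 : R) (x1 x2 : R * R) : R :=
  item_util B1 B2 v11 v21 x1.1 x2.1 + item_util B1 B2 v12 v22 x1.2 x2.2.

Definition util2 (B1 B2 v11 v12 v21 v22 : R) (x1 x2 : R * R) : R :=
  item_util B2 B1 v21 v11 x2.1 x1.1 + item_util B2 B1 v22 v12 x2.2 x1.2.

Definition feasible (B : R) : set (R * R) :=
  [set x | 0 <= x.1 /\ 0 <= x.2 /\ x.1 + x.2 <= B].

Definition mixed_strategy (B : R) (P : probability (R * R)%type R) : Prop :=
  P (feasible B) = 1%E.

Definition EU1 (B1 B2 v11 v12 v21 v22 : R)
    (P1 P2 : probability (R * R)%type R) : \bar R :=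
  (\int[P1]_x1 \int[P2]_x2 (util1 B1 B2 v11 v12 v21 v22 x1 x2)%:E)%E.

Definition EU2 (B1 B2 v11 v12 v21 v22 : R)
    (P1 P2 : probability (R * R)%type R) : \bar R :=
  (\int[P1]_x1 \int[P2]_x2 (util2 B1 B2 v11 v12 v21 v22 x1 x2)%:E)%E.

Definition nash_eq (B1 B2 v11 v12 v21 v22 : R)
    (P1 P2 : probability (R * R)%type R) : Prop :=
  [/\ mixed_strategy B1 P1, mixed_strategy B2 P2,
      (forall Q1, mixed_strategy B1 Q1 ->
         (EU1 B1 B2 v11 v12 v21 v22 Q1 P2 <= EU1 B1 B2 v11 v12 v21 v22 P1 P2)%E) &
      (forall Q2, mixed_strategy B2 Q2 ->
         (EU2 B1 B2 v11 v12 v21 v22 P1 Q2 <= EU2 B1 B2 v11 v12 v21 v22 P1 P2)%E)].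

(* arc-length (1-dim. Hausdorff) measure of A restricted to the segment
   {(t, c - t) : t in [0, c]}, parametrized by t with speed sqrt 2 *)
Definition seg_param_set (c : R) (A : set (R * R)) : set R :=
  [set t : R | 0 <= t <= c /\ A (t, c - t)].

Definition seg_arclength (c : R) (A : set (R * R)) : \bar R :=
  ((Num.sqrt 2)%:E * lebesgue_measure (seg_param_set c A))%E.

Definition seg_distribution (c f : R) (A : set (R * R)) : \bar R :=
  (f%:E * seg_arclength c A)%E.

End AllPay.

(* Main.v *)
Require Import Defs.
From HB Require Import structures.
From mathcomp Require Import all_boot all_order all_algebra.
From mathcomp Require Import all_classical all_reals all_analysis.
From mathcomp Require Import ring lra measurable_realfun.
Import Order.TTheory GRing.Theory Num.Theory.
Local Open Scope classical_set_scope.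
Local Open Scope ring_scope.
Set Implicit Arguments. Unset Strict Implicit. Unset Printing Implicit Defensive.
Section Aux.
Variable R : realType.

Definition wp (a b : R) : R := if b < a then 1 else if a < b then 0 else 1/2.

Definition phi (v : R) (y x : R * R) : R :=
  wp y.1 x.1 * v - y.1 + (wp y.2 x.2 * v - y.2).

Lemma win_prob_eq (B v a b : R) : win_prob B B v v a b = wp a b.
Proof. by rewrite /win_prob /wp /= ltxx !andbF. Qed.

Lemma util1_eq (B v : R) x1 x2 : util1 B B v v v v x1 x2 = phi v x1 x2.
Proof. by rewrite /util1 /item_util /phi !win_prob_eq. Qed.

Lemma util2_eq (B v : R) x1 x2 : util2 B B v v v v x1 x2 = phi v x2 x1.
Proof. by rewrite /util2 /item_util /phi !win_prob_eq. Qed.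

Lemma bdd_int d (T : measurableType d) (mu : probability T R) (f : T -> R) (M : R) :
  measurable_fun setT f -> (forall x, `|f x| <= M) ->
  mu.-integrable setT (EFin \o f).
Proof.
move=> mf fM; apply/integrableP; split; first exact/measurable_EFinP.
apply: (@le_lt_trans _ _ (\int[mu]_(x in setT) (cst M%:E) x)%E).
  apply: ge0_le_integral => //.
  - do 2 apply: measurableT_comp => //.
  - by move=> x _ /=; rewrite lee_fin.
rewrite integral_cst //.
rewrite [X in (_ * X)%E](_ : _ = 1%E); first by rewrite mule1 ltry.
exact: probability_setT.
Qed.

Lemma measurable_boolset d (T : measurableType d) (b : T -> bool) :
  measurable_fun setT b -> measurable [set x | b x].
Proof.
move=> mb; have := mb measurableT [set true] I.
by rewrite setTI; congr measurable; apply/seteqP; split => x /=.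
Qed.

Lemma mEF d (T : measurableType d) (f : T -> R) : measurable_fun setT f ->
  measurable_fun setT (fun x => (f x)%:E).
Proof. by move=> mf; apply/measurable_EFinP. Qed.

End Aux.
Section Seg.
Variable R : realType.
Variable c : R.
Hypothesis c0 : 0 < c.

Definition clp (a : R) : R := if a <= 0 then 0 else if a <= c then a else c.

Lemma leb_E1 (a : R) :
  lebesgue_measure [set t : R | 0 <= t <= c /\ t < a] = (clp a)%:E.
Proof.
rewrite /clp; case: ifPn => a0.
  rewrite (_ : [set _ | _] = set0) ?measure0 //; apply/seteqP; split => t //=.
  move=> [/andP[t0 _] ta]; lra.
case: ifPn => ac.
  rewrite (_ : [set _ | _] = `[0, a[%classic).
    rewrite lebesgue_measure_itv /= lte_fin; move: a0; rewrite -ltNge => a0.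
    by rewrite a0 oppr0 adde0.
  apply/seteqP; split => t /=; rewrite in_itv /=.
    by move=> [/andP[-> _] ->].
  move=> /andP[t0 ta]; split => //; apply/andP; split => //; lra.
rewrite (_ : [set _ | _] = `[0, c]%classic).
  by rewrite lebesgue_measure_itv /= lte_fin c0 oppr0 adde0.
apply/seteqP; split => t /=; rewrite in_itv /=.
  by move=> [-> _].
move=> /andP[t0 tc]; split; first by apply/andP.
lra.
Qed.

Lemma leb_E3 (a : R) :
  lebesgue_measure [set t : R | 0 <= t <= c /\ c - t < a] = (clp a)%:E.
Proof.
rewrite /clp; case: ifPn => a0.
  rewrite (_ : [set _ | _] = set0) ?measure0 //; apply/seteqP; split => t //=.
  move=> [/andP[t0 tc] ta]; lra.
case: ifPn => ac.
  rewrite (_ : [set _ | _] = `]c - a, c]%classic).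
    rewrite lebesgue_measure_itv /= lte_fin; move: a0; rewrite -ltNge => a0.
    rewrite ltrBlDr ltrDl a0 -EFinD; congr (_%:E); lra.
  apply/seteqP; split => t /=; rewrite in_itv /=.
    move=> [/andP[_ ->] ?]; rewrite andbT; lra.
  move=> /andP[t0 ta]; split; last lra. apply/andP; split => //; lra.
rewrite (_ : [set _ | _] = `[0, c]%classic).
  by rewrite lebesgue_measure_itv /= lte_fin c0 oppr0 adde0.
apply/seteqP; split => t /=; rewrite in_itv /=.
  by move=> [-> _].
move=> /andP[t0 tc]; split; first by apply/andP.
lra.
Qed.

Lemma seg_meas (A : set (R * R)) : measurable A -> measurable (seg_param_set c A).
Proof.
move=> mA; rewrite (_ : seg_param_set c A = `[0, c]%classic `&` ((fun t => (t, c - t)) @^-1` A)).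
  have mf : measurable_fun setT (fun t : R => (t, c - t)).
    apply: measurable_fun_pair => //.
    by apply: measurable_funB => //.
  have := mf measurableT _ mA; rewrite setTI => mpre.
  by apply: measurableI => //; exact: measurable_itv.
apply/seteqP; split => t /=; rewrite /seg_param_set /= in_itv /=; by move=> [].
Qed.

Lemma leb_pt (A : set (R * R)) (a : R) : measurable A ->
  (forall t, 0 <= t <= c -> A (t, c - t) -> t = a) ->
  lebesgue_measure (seg_param_set c A) = 0%E.
Proof.
move=> mA h.
have sA : seg_param_set c A `<=` `[a, a]%classic.
  by move=> t [tc At]; rewrite /= in_itv /= (h t tc At) lexx.
have := @subset_measure0 _ _ _ (@lebesgue_measure R) _ `[a,a]%classic (seg_meas mA) (measurable_itv _) sA.
apply.
have := lebesgue_measure_itv (R:=R) `[a, a]; rewrite /= ltxx; exact.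
Qed.

End Seg.
Section Lin.
Variable R : realType.
Variables (d : measure_display) (T : measurableType d) (P : probability T R).

Lemma iZ (k : R) (A : set T) : measurable A ->
  P.-integrable setT (fun x => (k * \1_A x)%:E).
Proof.
move=> mA; rewrite (_ : (fun x => _) = (fun x => k%:E * (\1_A x)%:E)%E).
  by apply: integrableZl => //; exact: integrable_indic.
by apply/funext => x; rewrite EFinM.
Qed.

Lemma int_Z (k : R) (A : set T) : measurable A ->
  (\int[P]_x (k * \1_A x)%:E = k%:E * P A)%E.
Proof.
move=> mA; rewrite (_ : (fun x => _) = (fun x => k%:E * (\1_A x)%:E)%E).
  by rewrite integralZl //; [rewrite integral_indic // setIT | exact: integrable_indic].
by apply/funext => x; rewrite EFinM.
Qed.

Lemma int_lin (A1 A2 A3 A4 : set T) (k1 k2 k3 k4 k5 : R) :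
  measurable A1 -> measurable A2 -> measurable A3 -> measurable A4 ->
  (\int[P]_x ((k1 * \1_A1 x + k2 * \1_A2 x + (k3 * \1_A3 x + k4 * \1_A4 x) - k5)%:E)
   = k1%:E * P A1 + k2%:E * P A2 + (k3%:E * P A3 + k4%:E * P A4) - k5%:E)%E.
Proof.
move=> m1 m2 m3 m4.
rewrite (_ : (fun x => _) = (fun x => ((k1 * \1_A1 x)%:E + (k2 * \1_A2 x)%:E)
   + ((k3 * \1_A3 x)%:E + (k4 * \1_A4 x)%:E) - (cst k5%:E) x)%E); last first.
  by apply/funext => x; rewrite /= EFinB !EFinD.
have i1 := iZ k1 m1; have i2 := iZ k2 m2; have i3 := iZ k3 m3; have i4 := iZ k4 m4.
have ic : P.-integrable setT (fun x => cst k5%:E x).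
  have := @finite_measure_integrable_cst _ _ _ P setT k5 measurableT. by [].
rewrite integralB //; last by apply: integrableD => //; apply: integrableD.
rewrite integralD //; [|exact: integrableD|exact: integrableD].
rewrite integralD // integralD // !int_Z // integral_cst //.
rewrite [X in (_ - _ * X)%E](_ : _ = 1%E) ?mule1 //.
exact: probability_setT.
Qed.

End Lin.
Section SegProb.
Variable R : realType.
Variable c v : R.
Hypothesis c0 : 0 < c.
Variable P : probability (R * R)%type R.
Hypothesis hP : forall A, measurable A ->
  P A = seg_distribution c (Num.sqrt 2 * c)^-1 A.

Lemma segP A : measurable A ->
  P A = ((c^-1)%:E * lebesgue_measure (seg_param_set c A))%E.
Proof.
move=> mA; rewrite hP // /seg_distribution /seg_arclength muleA -EFinM.
have s0 : 0 < Num.sqrt 2 :> R by rewrite sqrtr_gt0 ltr0n.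
by congr (_%:E * _)%E; rewrite invfM mulrAC mulVf ?mul1r // gt_eqF.
Qed.

Definition lt1 (a : R) := [set x : R * R | x.1 < a].
Definition eq1 (a : R) := [set x : R * R | x.1 == a].
Definition lt2 (a : R) := [set x : R * R | x.2 < a].
Definition eq2 (a : R) := [set x : R * R | x.2 == a].

Lemma m_lt1 a : measurable (lt1 a).
Proof. apply: measurable_boolset; apply: measurable_fun_ltr => //; exact: measurable_fst. Qed.
Lemma m_lt2 a : measurable (lt2 a).
Proof. apply: measurable_boolset; apply: measurable_fun_ltr => //; exact: measurable_snd. Qed.
Lemma m_eq1 a : measurable (eq1 a).
Proof. apply: measurable_boolset; apply: measurable_fun_eqr => //; exact: measurable_fst. Qed.
Lemma m_eq2 a : measurable (eq2 a).
Proof. apply: measurable_boolset; apply: measurable_fun_eqr => //; exact: measurable_snd. Qed.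

Lemma P_lt1 a : P (lt1 a) = (clp c a / c)%:E.
Proof.
rewrite segP; last exact: m_lt1.
by rewrite /seg_param_set /= leb_E1 // -EFinM mulrC.
Qed.

Lemma P_lt2 a : P (lt2 a) = (clp c a / c)%:E.
Proof.
rewrite segP; last exact: m_lt2.
by rewrite /seg_param_set /= leb_E3 // -EFinM mulrC.
Qed.

Lemma P_eq1 a : P (eq1 a) = 0%E.
Proof.
rewrite segP; last exact: m_eq1.
by rewrite (leb_pt (a:=a)) ?mule0 //; [exact: m_eq1 | move=> t _ /eqP].
Qed.

Lemma P_eq2 a : P (eq2 a) = 0%E.
Proof.
rewrite segP; last exact: m_eq2.
rewrite (leb_pt (a:=c - a)) ?mule0 //; [exact: m_eq2 | move=> t _ /eqP /= <-].
by rewrite opprB addrC subrK.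
Qed.

Lemma inb (b : R * R -> bool) x : (x \in [set y | b y]) = b x.
Proof.
case: (boolP (b x)) => h; first by rewrite mem_set.
by rewrite memNset //; apply/negP.
Qed.

Lemma phi_indic y x : phi v y x =
  v * \1_(lt1 y.1) x + v / 2 * \1_(eq1 y.1) x +
  (v * \1_(lt2 y.2) x + v / 2 * \1_(eq2 y.2) x) - (y.1 + y.2).
Proof.
rewrite /phi /wp !indicE /lt1 /eq1 /lt2 /eq2 !inb.
case: (ltgtP x.1 y.1) => _; case: (ltgtP x.2 y.2) => _ /=; ring.
Qed.

Definition G (y : R * R) : R := v * (clp c y.1 + clp c y.2) / c - y.1 - y.2.

Lemma intP y : (\int[P]_x (phi v y x)%:E = (G y)%:E)%E.
Proof.
under eq_integral => x _ do rewrite phi_indic.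
rewrite int_lin; [|exact: m_lt1|exact: m_eq1|exact: m_lt2|exact: m_eq2].
rewrite P_lt1 P_eq1 P_lt2 P_eq2 !mule0 !adde0 -!EFinM -!EFinD.
congr EFin; rewrite /G; field.
by rewrite gt_eqF.
Qed.

End SegProb.
Section Meas.
Variable R : realType.
Variables (d : measure_display) (T : measurableType d).

Lemma mwp (f g : T -> R) : measurable_fun setT f -> measurable_fun setT g ->
  measurable_fun setT (fun t => wp (f t) (g t)).
Proof.
move=> mf mg; rewrite /wp.
apply: measurable_fun_ifT => //; first exact: measurable_fun_ltr.
apply: measurable_fun_ifT => //; exact: measurable_fun_ltr.
Qed.

Lemma mphi (v : R) (Y X : T -> R * R) : measurable_fun setT Y -> measurable_fun setT X ->
  measurable_fun setT (fun t => phi v (Y t) (X t)).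
Proof.
move=> mY mX; rewrite /phi.
have mY1 : measurable_fun setT (fun t => (Y t).1) by exact: measurableT_comp mY.
have mY2 : measurable_fun setT (fun t => (Y t).2) by exact: measurableT_comp mY.
have mX1 : measurable_fun setT (fun t => (X t).1) by exact: measurableT_comp mX.
have mX2 : measurable_fun setT (fun t => (X t).2) by exact: measurableT_comp mX.
apply: measurable_funD; apply: measurable_funB => //; apply: measurable_funM => //;
  exact: mwp.
Qed.

Lemma mclp (c : R) (f : T -> R) : measurable_fun setT f ->
  measurable_fun setT (fun t => clp c (f t)).
Proof.
move=> mf; rewrite /clp.
apply: measurable_fun_ifT => //; first exact: measurable_fun_ler.
apply: measurable_fun_ifT => //; exact: measurable_fun_ler.
Qed.

End Meas.

Section Meas2.
Variable R : realType.

Definition fb (B : R) (y : R * R) : bool := (0 <= y.1) && (0 <= y.2) && (y.1 + y.2 <= B).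

Lemma mfb (B : R) : measurable_fun setT (fb B).
Proof.
rewrite /fb; apply: measurable_and; first apply: measurable_and.
- apply: measurable_fun_ler => //; exact: measurable_fst.
- apply: measurable_fun_ler => //; exact: measurable_snd.
- apply: measurable_fun_ler => //; apply: measurable_funD; [exact: measurable_fst|exact: measurable_snd].
Qed.

Lemma feasibleE (B : R) : feasible B = [set y | fb B y].
Proof.
apply/seteqP; split => y /=; rewrite /feasible /fb /=.
  by move=> [-> [-> ->]].
by move=> /andP[/andP[-> ->] ->].
Qed.

Lemma mG (c v : R) : measurable_fun setT (G c v).
Proof.
rewrite /G; apply: measurable_funB; first apply: measurable_funB.
- apply: measurable_funM => //; apply: measurable_funM => //.
  apply: measurable_funD; apply: mclp; [exact: measurable_fst|exact: measurable_snd].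
- exact: measurable_fst.
- exact: measurable_snd.
Qed.

End Meas2.
Section AE.
Variable R : realType.
Variables (d : measure_display) (T : measurableType d) (Q : probability T R).

Lemma int_agree (F : set T) (f g : T -> \bar R) : measurable F -> Q F = 1%E ->
  measurable_fun setT f -> measurable_fun setT g ->
  (forall x, F x -> f x = g x) ->
  (\int[Q]_x f x = \int[Q]_x g x)%E.
Proof.
move=> mF QF mf mg fg; apply: ae_eq_integral => //.
exists (~` F); split => //.
- exact: measurableC.
- by transitivity (1 - Q F)%E; [exact: probability_setC | rewrite QF subee].
by move=> x /= h Fx; apply: h => _; exact: fg.
Qed.

Lemma int_leK (f : T -> \bar R) (K : R) : measurable_fun setT f -> 0 <= K ->
  (forall x, (f x <= K%:E)%E) -> (\int[Q]_x f x <= K%:E)%E.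
Proof.
move=> mf K0 fK; rewrite integralE.
rewrite -[K%:E]sube0; apply: leeB; last exact: integral_ge0.
apply: (@le_trans _ _ (\int[Q]_(x in setT) (cst K%:E) x)%E).
  apply: ge0_le_integral => //.
  - exact: measurable_funepos.
  - move=> x _; rewrite funepos.unlock ge_max fK /=. by rewrite lee_fin.
rewrite integral_cst //.
rewrite [X in (_ * X)%E](_ : _ = 1%E) ?mule1 //.
exact: probability_setT.
Qed.

Lemma int_cstK (F : set T) (f : T -> \bar R) (K : R) : measurable F -> Q F = 1%E ->
  measurable_fun setT f -> (forall x, F x -> f x = K%:E) ->
  (\int[Q]_x f x = K%:E)%E.
Proof.
move=> mF QF mf fK; rewrite (@int_agree F f (cst K%:E)) //.
rewrite integral_cst //.
rewrite [X in (_ * X)%E](_ : _ = 1%E) ?mule1 //.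
exact: probability_setT.
Qed.

End AE.
Section Arith.
Variable R : realType.
Variables (c v B : R).
Hypotheses (c0 : 0 < c) (cv : c <= v) (cB : c <= B) (vB : c < v -> c = B).

Lemma clp_id a : 0 <= a <= c -> clp c a = a.
Proof.
move=> /andP[a0 ac]; rewrite /clp ac; case: ifPn => // h; lra.
Qed.

Lemma G_le y : fb B y -> G c v y <= v - c.
Proof.
move=> /andP[/andP[y1 y2] yB]; rewrite /G.
suff : v * (clp c y.1 + clp c y.2) / c <= v - c + y.1 + y.2 by lra.
rewrite ler_pdivrMr //.
have [vc|vc] := eqVneq v c.
  rewrite vc.
  have h1 : clp c y.1 <= y.1 by rewrite /clp; case: ifPn => ?; [lra|case: ifPn => ?; lra].
  have h2 : clp c y.2 <= y.2 by rewrite /clp; case: ifPn => ?; [lra|case: ifPn => ?; lra].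
  rewrite -subr_ge0.
  have -> : (c - c + y.1 + y.2) * c - c * (clp c y.1 + clp c y.2) =
    c * ((y.1 - clp c y.1) + (y.2 - clp c y.2)) by ring.
  by apply: mulr_ge0; [exact: ltW|rewrite addr_ge0 // subr_ge0].
have cvl : c < v by rewrite lt_def vc cv.
have cBe := vB cvl.
rewrite !clp_id; [|apply/andP; split; lra|apply/andP; split; lra].
rewrite -subr_ge0.
have -> : (v - c + y.1 + y.2) * c - v * (y.1 + y.2) = (v - c) * (c - (y.1 + y.2)) by ring.
apply: mulr_ge0; lra.
Qed.

Lemma G_S y : 0 <= y.1 <= c -> y.2 = c - y.1 -> G c v y = v - c.
Proof.
move=> h1 h2.
have h3 : 0 <= c - y.1 <= c by case/andP: h1 => ? ?; apply/andP; split; lra.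
rewrite /G (clp_id h1) h2 (clp_id h3) subrKC mulfK ?gt_eqF //; lra.
Qed.

Lemma wp01 (a b : R) : 0 <= wp a b <= 1.
Proof. rewrite /wp; case: ifPn => _; [|case: ifPn => _]; apply/andP; split; lra. Qed.

Lemma phi_bd y x : fb B y -> `|phi v y x| <= 2 * v + 2 * B.
Proof.
move=> /andP[/andP[y1 y2] yB]; rewrite /phi ler_norml.
have /andP[w1 w1'] := wp01 y.1 x.1; have /andP[w2 w2'] := wp01 y.2 x.2.
have v0 : 0 <= v := le_trans (ltW c0) cv.
have p1 : 0 <= wp y.1 x.1 * v by exact: mulr_ge0.
have p2 : 0 <= wp y.2 x.2 * v by exact: mulr_ge0.
have q1 : wp y.1 x.1 * v <= v by rewrite -[X in _ <= X]mul1r; exact: ler_wpM2r.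
have q2 : wp y.2 x.2 * v <= v by rewrite -[X in _ <= X]mul1r; exact: ler_wpM2r.
apply/andP; split; lra.
Qed.

End Arith.
Section Main.
Variable R : realType.
Variables (c v B : R).
Hypotheses (c0 : 0 < c) (cv : c <= v) (cB : c <= B) (vB : c < v -> c = B).
Variable P : probability (R * R)%type R.
Hypothesis hP : forall A, measurable A ->
  P A = seg_distribution c (Num.sqrt 2 * c)^-1 A.

Definition Sset := [set y : R * R | (0 <= y.1 <= c) && (y.2 == c - y.1)].

Lemma mS : measurable Sset.
Proof.
apply: measurable_boolset; apply: measurable_and; first apply: measurable_and.
- apply: measurable_fun_ler => //; exact: measurable_fst.
- apply: measurable_fun_ler => //; exact: measurable_fst.
- apply: measurable_fun_eqr; first exact: measurable_snd.
  apply: measurable_funB => //; exact: measurable_fst.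
Qed.

Lemma mF : measurable (feasible B).
Proof. rewrite feasibleE; apply: measurable_boolset; exact: mfb. Qed.

Lemma PS : P Sset = 1%E.
Proof.
rewrite (segP hP mS).
rewrite (_ : seg_param_set c Sset = `[0, c]%classic).
  rewrite lebesgue_measure_itv /= lte_fin c0 oppr0 adde0 -EFinM mulVf //.
  by rewrite gt_eqF.
apply/seteqP; split => t /=; rewrite /seg_param_set /Sset /= in_itv /=.
  by move=> [].
by move=> h; split => //; rewrite h eqxx.
Qed.

Lemma SF : Sset `<=` feasible B.
Proof.
move=> y /andP[/andP[y1 y1c] /eqP y2]; rewrite /feasible /=; rewrite y2.
have cB2 := cB; split => //; split; lra.
Qed.

Lemma PF : P (feasible B) = 1%E.
Proof.
apply/eqP; rewrite eq_le; apply/andP; split; first exact: probability_le1 mF.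
rewrite -PS; apply: le_measure; [exact: (mem_set mS) | exact: (mem_set mF) | exact: SF].
Qed.

Definition psi (z : (R * R) * (R * R)) : R := if fb B z.2 then phi v z.2 z.1 else 0.
Definition H (y : R * R) : R := if fb B y then G c v y else 0.

Lemma mH : measurable_fun setT H.
Proof. apply: measurable_fun_ifT => //; [exact: mfb | exact: mG]. Qed.

Lemma fbF y : fb B y -> feasible B y.
Proof. by rewrite feasibleE. Qed.

Lemma Ffb y : feasible B y -> fb B y.
Proof. by rewrite feasibleE. Qed.

Lemma intH_le (Q : probability (R * R)%type R) :
  (\int[Q]_x (H x)%:E <= (v - c)%:E)%E.
Proof.
have cv2 := cv; have c02 := c0.
apply: int_leK; first exact: (mEF mH).
  by rewrite subr_ge0.
move=> x; rewrite lee_fin /H; case: ifPn => h; first exact: (G_le c0 cv vB h).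
by rewrite subr_ge0.
Qed.

Lemma intG_le (Q : probability (R * R)%type R) : Q (feasible B) = 1%E ->
  (\int[Q]_x (G c v x)%:E <= (v - c)%:E)%E.
Proof.
move=> QF; rewrite (@int_agree _ _ _ Q (feasible B) _ (fun x => (H x)%:E)).
- exact: intH_le.
- exact: mF.
- exact: QF.
- exact: (mEF (mG c v)).
- exact: (mEF mH).
by move=> x /Ffb h; rewrite /H h.
Qed.

Lemma intG_P : (\int[P]_x (G c v x)%:E = (v - c)%:E)%E.
Proof.
apply: (@int_cstK _ _ _ P Sset); [exact: mS | exact: PS | exact: (mEF (mG c v))|].
move=> y /andP[h1 /eqP h2]; congr EFin; exact: (G_S v c0 h1 h2).
Qed.

Lemma intH_P : (\int[P]_x (H x)%:E = (v - c)%:E)%E.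
Proof.
apply: (@int_cstK _ _ _ P Sset); [exact: mS | exact: PS | exact: (mEF mH)|].
move=> y Sy; have := Ffb (SF Sy); rewrite /H => ->.
move: Sy => /andP[h1 /eqP h2]; congr EFin; exact: (G_S v c0 h1 h2).
Qed.

Lemma swapQ (Q : probability (R * R)%type R) : Q (feasible B) = 1%E ->
  (\int[P]_x1 \int[Q]_x2 (phi v x2 x1)%:E = \int[Q]_x2 (H x2)%:E)%E.
Proof.
move=> QF.
transitivity (\int[P]_x1 \int[Q]_x2 (psi (x1, x2))%:E)%E.
  apply: eq_integral => x1 _.
  apply: (@int_agree _ _ _ Q (feasible B)) => //; first exact: mF.
  - apply: mEF; apply: (@mphi _ _ _ v id (fun=> x1)) => //.
  - apply: mEF; rewrite /psi /=; apply: measurable_fun_ifT => //; first exact: mfb.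
    apply: (@mphi _ _ _ v id (fun=> x1)) => //.
  - by move=> x2 /Ffb h; rewrite /psi /= h.
rewrite (Fubini (f := fun z => (psi z)%:E)); last first.
  apply: (@bdd_int _ _ _ _ _ (2 * v + 2 * B)).
    rewrite /psi; apply: measurable_fun_ifT => //.
      apply: measurableT_comp; [exact: mfb | exact: measurable_snd].
    apply: mphi; [exact: measurable_snd | exact: measurable_fst].
  move=> z; rewrite /psi; case: ifPn => h; first exact: (phi_bd c0 cv _ h).
  have cv2 := cv; have c02 := c0; have cB2 := cB.
  rewrite normr0; lra.
apply: eq_integral => x2 _.
rewrite /H; case: ifPn => h.
  under eq_integral => x1 _ do rewrite /psi /= h.
  exact: (intP v c0 hP x2).
under eq_integral => x1 _ do rewrite /psi /= (negbTE h).
exact: integral0.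
Qed.

End Main.
Theorem theorem2 (R : realType) (B1 B2 v11 v12 v21 v22 : R)
  (P1 P2 : probability (R * R)%type R) :
  0 <= B1 -> 0 <= B2 -> 0 < v11 -> 0 < v12 -> 0 < v21 -> 0 < v22 ->
  B1 = B2 -> v11 = v12 -> v12 = v21 -> v21 = v22 ->
  let c := Num.min v11 B1 in
  0 < c ->
  (forall A, measurable A ->
     P1 A = seg_distribution c (Num.sqrt 2 * c)^-1 A) ->
  (forall A, measurable A ->
     P2 A = seg_distribution c (Num.sqrt 2 * c)^-1 A) ->
  nash_eq B1 B2 v11 v12 v21 v22 P1 P2.
Proof.
move=> hB1 hB2 hv11 hv12 hv21 hv22 eB e1 e2 e3 c c0 hP1 hP2.
rewrite -eB -e3 -e2 -e1.
have cv : c <= v11 by rewrite /c ge_min lexx.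
have cB : c <= B1 by rewrite /c ge_min lexx orbT.
have vB : c < v11 -> c = B1.
  by rewrite /c /Num.min; case: ifPn => _; rewrite ?ltxx.
have key1 : forall Q : probability (R * R)%type R,
    EU1 B1 B1 v11 v11 v11 v11 Q P2 = (\int[Q]_x (G c v11 x)%:E)%E.
  move=> Q; rewrite /EU1; apply: eq_integral => x1 _.
  under eq_integral => x2 _ do rewrite util1_eq.
  exact: (intP v11 c0 hP2 x1).
have key2 : forall Q : probability (R * R)%type R, Q (feasible B1) = 1%E ->
    EU2 B1 B1 v11 v11 v11 v11 P1 Q = (\int[Q]_x (H c v11 B1 x)%:E)%E.
  move=> Q hQ; rewrite /EU2.
  under eq_integral => x1 _ do under eq_integral => x2 _ do rewrite util2_eq.
  exact: (swapQ c0 cv cB hP1 hQ).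
split.
- exact: (PF c0 cB hP1).
- exact: (PF c0 cB hP2).
- move=> Q1 hQ1; rewrite !key1 (intG_P v11 c0 hP1).
  exact: (intG_le c0 cv vB hQ1).
- move=> Q2 hQ2; rewrite (key2 Q2 hQ2) (key2 P2 (PF c0 cB hP2)) (intH_P v11 c0 cB hP2).
  exact: (intH_le c0 cv vB Q2).
Qed.
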